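(* Let $G=(V,E)$ be a claw-free graph and $I$ a maximum cardinality independent set of $G$. Let $a\in I$ and let $v\in V_a$ be a vertex belonging to a cluster $C$. Then $N[v]\setminus N[a]=C\setminus V_a$.
   Context: Graphs are finite, simple, undirected; claw-free means no induced $K_{1,3}$. For $a\ne b$ in $I$, $V_{a,b}=\{v\in V\setminus I: N(v)\cap I=\{a,b\}\}$ ($2$-packs), and for $a\in I$, $V_a=\{v\in V\setminus I : N(v)\cap I=\{a\}\}$ ($1$-packs). $\mathtt{T2}^a$ is the set of vertices $v\in V_a$ that have neighbours in at least two distinct $1$-packs other than $V_a$; $\mathtt{T2}=\bigcup_{a\in I}\mathtt{T2}^a$. $G_{\mathtt{T2}}$ is the graph on vertex set $\mathtt{T2}$ whose edges are the edges of $G[\mathtt{T2}]$ with endpoints in different $1$-packs. A cluster is the vertex set of a connected component of $G_{\mathtt{T2}}$. *)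

(* Defs.v *)
(* Simple graph = symmetric irreflexive relation on a finType. *)
From mathcomp Require Import all_boot.
Set Implicit Arguments. Unset Strict Implicit. Unset Printing Implicit Defensive.

Section Defs.
Variables (T : finType) (e : rel T).

Definition nbhd (v : T) : {set T} := [set u | e v u].
Definition cnbhd (v : T) : {set T} := v |: nbhd v.

Definition independent (I : {set T}) : Prop :=
  forall x y, x \in I -> y \in I -> ~~ e x y.

Definition max_independent (I : {set T}) : Prop :=
  independent I /\ forall J : {set T}, independent J -> #|J| <= #|I|.

Definition claw_free : Prop :=
  forall x y1 y2 y3 : T, e x y1 -> e x y2 -> e x y3 ->
    y1 != y2 -> y1 != y3 -> y2 != y3 ->
    [|| e y1 y2, e y1 y3 | e y2 y3].

Variable I : {set T}.

Definition pack1 (a : T) : {set T} :=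
  [set v in ~: I | nbhd v :&: I == [set a]].

Definition T2a (a : T) : {set T} :=
  [set v in pack1 a | [exists b in I, exists c in I,
     [&& b != c, b != a, c != a,
         [exists u in pack1 b, e v u] & [exists u in pack1 c, e v u]]]].

Definition T2 : {set T} := \bigcup_(a in I) T2a a.

Definition T2rel : rel T := fun x y =>
  [&& x \in T2, y \in T2, e x y &
      ~~ [exists a in I, (x \in pack1 a) && (y \in pack1 a)]].

Definition cluster (C : {set T}) : Prop :=
  exists2 x, x \in T2 & C = [set y in T2 | connect T2rel x y].

End Defs.

(* Main.v *)
Require Import Defs.
From mathcomp Require Import all_boot.

Theorem corollary1 (T : finType) (e : rel T)
  (e_sym : symmetric e) (e_irr : irreflexive e)
  (Hcf : claw_free e) (I : {set T}) (HI : max_independent e I)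
  (a : T) (Ha : a \in I) (v : T) (Hv : v \in pack1 e I a)
  (C : {set T}) (HC : cluster e I C) (HvC : v \in C) :
  cnbhd e v :\: cnbhd e a = C :\: pack1 e I a.
Proof.
have [Hind Hmax] := HI.
have pkE : forall x b, x \in pack1 e I b ->
   (x \notin I) /\ (forall c, c \in I -> e x c = (c == b)).
  move=> x b; rewrite /pack1 inE in_setC => /andP [xI /eqP H]; split=> // c cI.
  have := congr1 (fun S : {set T} => c \in S) H; rewrite /= !inE cI andbT; done.
have pkI : forall x b, x \in pack1 e I b -> b \in I.
  move=> x b; rewrite /pack1 inE => /andP [_ /eqP H].
  have : b \in nbhd e x :&: I by rewrite H set11.
  by rewrite inE => /andP[].
have pk_uniq : forall x b c, x \in pack1 e I b -> x \in pack1 e I c -> b = c.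
  move=> x b c hb hc; have [_ Hb] := pkE _ _ hb; have [_ Hc] := pkE _ _ hc.
  have := Hb c (pkI _ _ hc); rewrite (Hc c (pkI _ _ hc)) eqxx.
  by move/esym/eqP => ->.
have pk_neq : forall x y b c, x \in pack1 e I b -> y \in pack1 e I c -> b != c -> x != y.
  move=> x y b c hx hy bc; apply/eqP => E; subst y.
  by rewrite (pk_uniq _ _ _ hx hy) eqxx in bc.
have claw : forall x y1 y2 y3, e x y1 -> e x y2 -> e x y3 -> y1 != y2 ->
    y1 != y3 -> y2 != y3 -> ~~ e y1 y3 -> ~~ e y2 y3 -> e y1 y2.
  move=> x y1 y2 y3 h1 h2 h3 d12 d13 d23 n13 n23.
  have := Hcf x y1 y2 y3 h1 h2 h3 d12 d13 d23.
  by rewrite (negbTE n13) (negbTE n23) !orbF.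
have nIn : forall x y, x \notin I -> y \in I -> x != y.
  by move=> x y xI yI; apply: contraNneq xI => ->.
set K := fun z => nbhd e z :\: cnbhd e a.
have memK : forall z w, (w \in K z) = [&& w != a, ~~ e a w & e z w].
  by move=> z w; rewrite /K /cnbhd !inE negb_or andbA.
have [vI Hva] := pkE v a Hv.
have Kna : forall p w, w \in K p -> w \notin pack1 e I a.
  move=> p w; rewrite memK => /and3P [wa naw _]; apply/negP => wa'.
  have [wI Hw] := pkE _ _ wa'.
  by move: naw; rewrite e_sym (Hw a Ha) eqxx.
have K_pack : forall p w, p \in pack1 e I a -> w \in K p ->
    exists2 b', b' != a & w \in pack1 e I b'.
  move=> p w hp; rewrite memK => /and3P [wa naw epw].
  have [pI Hpa] := pkE _ _ hp.
  have wI : w \notin I.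
    apply/negP => wI; have := Hpa w wI; by rewrite epw (negbTE wa).
  case: (boolP [exists b in I, e w b]) => [/existsP [b' /andP [b'I ewb]] | Hno].
  - have b'a : b' != a by apply/eqP => E; move: naw; rewrite -E e_sym ewb.
    exists b' => //.
    rewrite /pack1 inE in_setC wI /=; apply/eqP/setP => c; rewrite !inE.
    case: (eqVneq c b') => [->|cb]; first by rewrite ewb b'I.
    apply/negbTE; apply/negP => /andP [ewc cI].
    have ca : c != a by apply/eqP => E; move: naw; rewrite -E e_sym ewc.
    have H := claw w p b' c (ltac:(by rewrite e_sym)) ewb ewc (nIn _ _ pI b'I)
      (nIn _ _ pI cI) (ltac:(by rewrite eq_sym)) (ltac:(by rewrite Hpa // (negbTE ca))) (Hind _ _ b'I cI).
    by move: H; rewrite Hpa // (negbTE b'a).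
  - exfalso.
    have indJ : independent e (w |: I).
      move=> x y; rewrite !inE => /orP[/eqP->|xI] /orP[/eqP->|yI].
      + by rewrite e_irr.
      + by apply/negP => ewy; move/negP: Hno; apply; apply/existsP; exists y; rewrite yI ewy.
      + by apply/negP => ewy; move/negP: Hno; apply; apply/existsP; exists x; rewrite xI e_sym ewy.
      + exact: Hind.
    have := Hmax _ indJ; by rewrite cardsU1 wI /= add1n ltnn.
have clique : forall p w w', p \in pack1 e I a -> w \in K p -> w' \in K p ->
    w != w' -> e w w'.
  move=> p w w' hp; rewrite !memK => /and3P [wa naw epw] /and3P [w'a naw' epw'] ww'.
  have [_ Hpa] := pkE _ _ hp.
  apply: (claw p w w' a) => //; first by rewrite Hpa // eqxx.
  1,2: by rewrite e_sym.
have T2pk : forall y, y \in T2 e I -> exists d, y \in pack1 e I d.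
  move=> y; rewrite /T2 => /bigcupP [d _]; rewrite /T2a inE => /andP [h _].
  by exists d.
have T2wit : forall p, p \in pack1 e I a -> p \in T2 e I ->
    exists b c ub uc, [/\ b != c, b != a, c != a,
      (ub \in pack1 e I b) && (ub \in K p) & (uc \in pack1 e I c) && (uc \in K p)].
  move=> p hp /bigcupP [a' a'I]; rewrite /T2a inE => /andP [hp' /existsP [b /andP [bI
     /existsP [c /andP [cI /and5P [bc ba ca /existsP [ub /andP [ubp eub]]
     /existsP [uc /andP [ucp euc]]]]]]]].
  have Ea := pk_uniq _ _ _ hp' hp; subst a'.
  exists b, c, ub, uc; split=> //.
  - rewrite ubp memK eub andbT /=; have [ubI Hub] := pkE _ _ ubp.
    by rewrite nIn //= e_sym Hub // eq_sym.
  - rewrite ucp memK euc andbT /=; have [ucI Huc] := pkE _ _ ucp.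
    by rewrite nIn //= e_sym Huc // eq_sym.
have SL2a : forall p q w b' w' d', p \in pack1 e I a -> q \in pack1 e I a ->
    w \in K p -> w \in pack1 e I b' -> e q w -> w' \in K p ->
    w' \in pack1 e I d' -> d' != b' -> e q w'.
  move=> p q w b' w' d' hp hq wK wb' eqw w'K w'd' db.
  have [qI Hq] := pkE _ _ hq; have [wI Hw] := pkE _ _ wb'; have [w'I Hw'] := pkE _ _ w'd'.
  have b'a : b' != a by apply/eqP => E; subst b'; move: (Kna _ _ wK); rewrite wb'.
  have qw' : q != w' by apply/eqP => E; subst w'; move: (Kna _ _ w'K); rewrite hq.
  apply: (claw w q w' b') => //.
  - by rewrite e_sym.
  - apply: (clique p) => //; rewrite eq_sym; exact: (pk_neq _ _ _ _ w'd' wb').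
  - by rewrite Hw ?eqxx // (pkI _ _ wb').
  - exact: nIn (pkI _ _ wb').
  - exact: nIn (pkI _ _ wb').
  - by rewrite Hq ?(pkI _ _ wb').
  - by rewrite Hw' ?(pkI _ _ wb') // eq_sym.
have SL2 : forall p q w b' w', p \in pack1 e I a -> p \in T2 e I -> q \in pack1 e I a ->
    w \in K p -> w \in pack1 e I b' -> e q w -> w' \in K p -> w' \in K q.
  move=> p q w b' w' hp pT2 hq wK wb' eqw w'K.
  have w'K' := w'K; rewrite memK in w'K'; case/and3P: w'K' => w'a naw' _.
  rewrite memK w'a naw' /=.
  have [d' _ w'd'] := K_pack _ _ hp w'K.
  case: (eqVneq d' b') => [Ed | nd]; last exact: (SL2a p q w b' w' d').
  subst d'.
  have fin : forall x c, x \in pack1 e I c -> x \in K p -> c != b' -> c != a -> e q w'.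
    move=> x c xc xK cb ca.
    have eqx := SL2a p q w b' x c hp hq wK wb' eqw xK xc cb.
    have [qI Hq] := pkE _ _ hq; have [w'I Hw'] := pkE _ _ w'd'; have cI := pkI _ _ xc.
    have qw' : q != w' by apply/eqP => E; subst w'; move: (Kna _ _ w'K); rewrite hq.
    apply: (claw x q w' c) => //.
    - by rewrite e_sym.
    - apply: (clique p) => //; exact: (pk_neq _ _ _ _ xc w'd').
    - by have [_ Hx] := pkE _ _ xc; rewrite Hx ?eqxx.
    - exact: nIn.
    - exact: nIn.
    - by rewrite Hq // ca.
    - by rewrite Hw' // cb.
  have [b [c [ub [uc [bc ba ca /andP [ubp ubK] /andP [ucp ucK]]]]]] := T2wit p hp pT2.
  case: (eqVneq b b') => [Eb | nb].
  - subst b; apply: (fin uc c ucp ucK _ ca); by rewrite eq_sym.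
  - exact: (fin ub b ubp ubK nb ba).
case: HC => x0 x0T2 Ceq; subst C.
move: HvC; rewrite inE => /andP [vT2 cx0v].
have T2rel_sym : symmetric (T2rel e I).
  move=> x y; rewrite /T2rel e_sym andbCA; congr [&& _, _, _ & ~~ _].
  by apply: eq_existsb => d; rewrite [(x \in _) && _]andbC.
have LHS : cnbhd e v :\: cnbhd e a = K v.
  apply/setP => z; rewrite /K /cnbhd !inE.
  case: (eqVneq z v) => [->|zv] //=.
  by rewrite e_sym (Hva a Ha) eqxx orbT.
rewrite LHS; apply/setP => w; apply/idP/idP.
- move=> wK.
  have [b' b'a wb'] := K_pack _ _ Hv wK.
  have [b [c [ub [uc [bc ba ca /andP [ubp ubK] /andP [ucp ucK]]]]]] := T2wit v Hv vT2.
  have wna := Kna _ _ wK.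
  have evw : e v w by move: wK; rewrite memK => /and3P[].
  have wT2 : w \in T2 e I.
    apply/bigcupP; exists b'; first exact: (pkI _ _ wb').
    rewrite /T2a inE wb' /=; apply/existsP; exists a; rewrite Ha /=.
    case: (eqVneq b' b) => [Eb | nb].
    - subst b'; apply/existsP; exists c; rewrite (pkI _ _ ucp) /=.
      rewrite eq_sym ca eq_sym b'a eq_sym bc /=.
      apply/andP; split; apply/existsP.
      + by exists v; rewrite Hv e_sym.
      + exists uc; rewrite ucp /=; apply: (clique v) => //.
        exact: (pk_neq _ _ _ _ wb' ucp).
    - apply/existsP; exists b; rewrite (pkI _ _ ubp) /=.
      rewrite eq_sym ba eq_sym b'a eq_sym nb /=.
      apply/andP; split; apply/existsP.
      + by exists v; rewrite Hv e_sym.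
      + exists ub; rewrite ubp /=; apply: (clique v) => //.
        exact: (pk_neq _ _ _ _ wb' ubp).
  rewrite in_setD wna /= inE wT2 /=.
  apply: (connect_trans cx0v); apply: connect1.
  rewrite /T2rel vT2 wT2 evw /=; apply/negP => /existsP [d /and3P [dI vd wd]].
  have Ed := pk_uniq _ _ _ Hv vd; subst d.
  by rewrite wd in wna.
- rewrite in_setD => /andP [nwa]; rewrite inE => /andP [wT2 cw].
  set P := fun z => ((z \in pack1 e I a) && (K z == K v)) || (z \in K v).
  have step : forall z z', P z -> T2rel e I z z' -> P z'.
    move=> z z' Pz /and4P [zT2 z'T2 ezz' nsame].
    have [d z'd] := T2pk z' z'T2.
    have [z'I Hz'] := pkE _ _ z'd.
    case/orP: Pz => [/andP [za /eqP KzE] | zK].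
    - have da : d != a.
        apply: contraNneq nsame => Eda; apply/existsP; exists a.
        by rewrite Ha za -Eda z'd.
      apply/orP; right; rewrite -KzE memK ezz' nIn //=.
      by rewrite andbT e_sym Hz' // eq_sym.
    - have [b' b'a zb'] := K_pack _ _ Hv zK.
      have db : d != b'.
        apply: contraNneq nsame => Ed; subst d; apply/existsP; exists b'.
        by rewrite (pkI _ _ zb') zb' z'd.
      have [zI Hz] := pkE _ _ zb'.
      have evz : e v z by move: zK; rewrite memK => /and3P[].
      case: (eqVneq d a) => [Eda | da].
      + subst d; apply/orP; left; rewrite z'd /=.
        rewrite eqEsubset; apply/andP; split; apply/subsetP => x hx.
        * apply: (SL2 z' v z b' x z'd z'T2 Hv _ zb' evz hx).
          rewrite memK [e z' z]e_sym ezz' andbT.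
          by move: zK; rewrite memK => /and3P [-> -> _].
        * apply: (SL2 v z' z b' x Hv vT2 z'd zK zb' _ hx); by rewrite e_sym.
      + apply/orP; right; rewrite memK nIn //= e_sym Hz' // eq_sym da /=.
        apply: (claw z v z' b') => //.
        * by rewrite e_sym.
        * rewrite Hz ?eqxx //; exact: (pkI _ _ zb').
        * apply: (pk_neq _ _ _ _ Hv z'd); by rewrite eq_sym.
        * exact: nIn (pkI _ _ zb').
        * exact: nIn (pkI _ _ zb').
        * rewrite Hva ?b'a //; exact: (pkI _ _ zb').
        * rewrite Hz' ?(pkI _ _ zb') //; by rewrite eq_sym.
  have cs := sym_connect_sym T2rel_sym.
  have cvw : connect (T2rel e I) v w by apply: connect_trans cw; rewrite cs.
  have Hpath : forall p z, P z -> path (T2rel e I) z p -> P (last z p).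
    elim=> [|z1 p IH] z Pz //= /andP [h1 h2].
    exact: IH _ (step _ _ Pz h1) h2.
  move/connectP: cvw => [p pth Ew].
  have := Hpath p v; rewrite -Ew /P (negbTE nwa) /=; apply => //.
  by rewrite Hv eqxx.
Qed.
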